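(* Consider algorithm TRIEST-BASE (described in the context) run with integer parameter $M\ge 6$ on an insertion-only edge stream. For every time $t$: if $t\le M$ then $\xi^{(t)}\tau^{(t)}=\tau^{(t)}=|\Delta^{(t)}|$, and if $t>M$ then $\mathbb{E}\left[\xi^{(t)}\tau^{(t)}\right]=|\Delta^{(t)}|$.
   Context: An insertion-only edge stream: at each time step $t=1,2,\dots$ an edge $e_t=\{u,v\}$ between two distinct vertices arrives, which is not already present; $G^{(t)}=(V^{(t)},E^{(t)})$ with $E^{(t)}=\{e_1,\dots,e_t\}$. A triangle in $G^{(t)}$ is a set of three edges $\{\{u,v\},\{v,w\},\{w,u\}\}\subseteq E^{(t)}$ with $u,v,w$ distinct; $\Delta^{(t)}$ is the set of all triangles of $G^{(t)}$. TRIEST-BASE maintains an edge sample $\mathcal{S}$ (initially empty) by reservoir sampling with capacity $M$: at time $t$, if $t\le M$ the edge $e_t$ is inserted into $\mathcal{S}$; if $t>M$, with probability $M/t$ an edge chosen uniformly at random from $\mathcal{S}$ is removed from $\mathcal{S}$ and then $e_t$ is inserted, otherwise $\mathcal{S}$ is unchanged. It maintains a counter $\tau$ (initially $0$): immediately after an edge $\{u,v\}$ is inserted into (resp. removed from) $\mathcal{S}$, $\tau$ is increased (resp. decreased) by $|\mathcal{N}^{\mathcal{S}}_{u,v}|$, the number of vertices $c$ such that both $\{c,u\}$ and $\{c,v\}$ are in the current $\mathcal{S}$. $\tau^{(t)}$ denotes the value of $\tau$ at the end of time step $t$. For positive integers $a\le\min\{M,b\}$, $\xi_{a,b}=1$ if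 $b\le M$ and $\xi_{a,b}=\prod_{i=0}^{a-1}\frac{b-i}{M-i}$ otherwise; $\xi^{(t)}=\xi_{3,t}$. The algorithm's estimate of $|\Delta^{(t)}|$ is $\xi^{(t)}\tau^{(t)}$. *)

(* Defs.v *)
(* TRIEST-BASE modelled as an explicit finite probability
   distribution (a weighted list of outcomes) over the algorithm's state. *)
From mathcomp Require Import all_boot all_order all_algebra.
Set Implicit Arguments. Unset Strict Implicit. Unset Printing Implicit Defensive.
Import Order.TTheory GRing.Theory Num.Theory.
Local Open Scope ring_scope.

(* An (undirected) edge {u,v} is given by a pair of vertices (nat);
   (u,v) and (v,u) denote the same edge. *)
Definition edge := (nat * nat)%type.
Definition enorm (e : edge) : edge := (minn e.1 e.2, maxn e.1 e.2).

Definition adj (S : seq edge) (a b : nat) : bool := ((a, b) \in S) || ((b, a) \in S).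

Definition verts (S : seq edge) : seq nat := undup (flatten [seq [:: e.1; e.2] | e <- S]).

Definition nbhd (S : seq edge) (u v : nat) : seq nat :=
  [seq c <- verts S | adj S c u && adj S c v].

(* triangles of the graph with edge set E, each listed once by its vertex
   triple a < b < c (a triangle {{a,b},{b,c},{c,a}} is determined by {a,b,c}) *)
Definition triangles (E : seq edge) : seq (nat * nat * nat) :=
  [seq x <- flatten [seq [seq (ab, c) | ab <- [seq (a, b) | a <- verts E, b <- verts E]] | c <- verts E] |
     let: (a, b, c) := x in
     [&& (a < b)%N, (b < c)%N, adj E a b, adj E b c & adj E a c]].

(* an insertion-only edge stream e_1, e_2, ... (e 0 is unused) *)
Definition valid_stream (e : nat -> edge) : Prop :=
  (forall t, (0 < t)%N -> (e t).1 != (e t).2) /\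
  (forall s t, (0 < s)%N -> (s < t)%N -> enorm (e s) != enorm (e t)).

Definition E_at (e : nat -> edge) (t : nat) : seq edge := [seq e i | i <- iota 1 t].

Definition dist (R : Type) (T : Type) := seq (R * T).
Definition dret (R : ringType) T (x : T) : dist R T := [:: (1, x)].
Definition dbind (R : ringType) T U (d : dist R T) (f : T -> dist R U) : dist R U :=
  flatten [seq [seq (p.1 * q.1, q.2) | q <- f p.2] | p <- d].
Definition prob (R : ringType) T (d : dist R T) (P : pred T) : R :=
  \sum_(p <- d | P p.2) p.1.
Definition expect (R : ringType) T (d : dist R T) (X : T -> R) : R :=
  \sum_(p <- d) p.1 * X p.2.

(* state of TRIEST-BASE : edge sample S and counter tau *)
Definition state := (seq edge * int)%type.

Definition ins (st : state) (f : edge) : state :=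
  let S := f :: st.1 in (S, st.2 + (size (nbhd S f.1 f.2))%:Z)%R.
Definition del (st : state) (f : edge) : state :=
  let S := rem f st.1 in (S, st.2 - (size (nbhd S f.1 f.2))%:Z)%R.

Definition step (R : fieldType) (M t : nat) (et : edge) (st : state) : dist R state :=
  if (t <= M)%N then dret R (ins st et)
  else
    (* with prob M/t: remove a uniformly random edge of S, then insert et *)
    [seq ((M%:R / t%:R) * (size st.1)%:R^-1, ins (del st f) et) | f <- st.1]
    ++ [:: (1 - M%:R / t%:R, st)].

Fixpoint run (R : fieldType) (M : nat) (e : nat -> edge) (t : nat) : dist R state :=
  match t with
  | 0 => dret R ([::], 0%R)
  | t'.+1 => dbind (run R M e t') (step R M t (e t))
  end.

Definition xi_ab (R : fieldType) (M a b : nat) : R :=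
  if (b <= M)%N then 1 else \prod_(i < a) ((b - i)%:R / (M - i)%:R).
Definition xi (R : fieldType) (M t : nat) : R := xi_ab R M 3 t.

(* Main.v *)
Require Import Defs.
From mathcomp Require Import all_boot all_order all_algebra.
From mathcomp Require Import zify ring lra.
Import Order.TTheory GRing.Theory Num.Theory.
Set Implicit Arguments. Unset Strict Implicit. Unset Printing Implicit Defensive.


Lemma sum_ext (s s' : seq nat) (F : nat -> nat) :
  uniq s -> uniq s' -> {subset s <= s'} ->
  (forall x, x \in s' -> x \notin s -> F x = 0%N) ->
  (\sum_(x <- s) F x = \sum_(x <- s') F x)%N.
Proof.
move=> us us' sub F0.
rewrite [RHS](bigID (mem s)) /= [X in (_ + X)%N]big1_seq ?addn0; last first.
  move=> x /andP[xs xs']; exact: F0.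
rewrite -[RHS]big_filter; apply: perm_big; apply: uniq_perm => //.
  by rewrite filter_uniq.
by move=> x; rewrite mem_filter; case xs: (x \in s) => //=; rewrite (sub _ xs).
Qed.

Lemma sum_pick (N w : nat) (F : nat -> nat) : (w < N)%N ->
  (\sum_(x <- iota 0 N) ((x == w) * F x) = F w)%N.
Proof.
move=> wN.
rewrite (bigD1_seq w) ?iota_uniq ?mem_iota //= eqxx mul1n big1 ?addn0 //.
by move=> x /negbTE ->.
Qed.

Definition bounded (N : nat) (S : seq edge) :=
  forall p, p \in S -> (p.1 < N)%N /\ (p.2 < N)%N.

Lemma mem_verts (S : seq edge) x :
  reflect (exists2 p, p \in S & (x == p.1) || (x == p.2)) (x \in verts S).
Proof.
rewrite /verts mem_undup; apply: (iffP idP).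
  elim: S => [|p S IH] //=; rewrite !inE => /or3P[h|h|h].
  - by exists p; rewrite ?inE ?eqxx ?h.
  - by exists p; rewrite ?inE ?eqxx ?h ?orbT.
  - by case/IH: h => q qS h; exists q; rewrite ?inE ?qS ?orbT.
case=> p; elim: S => [|q S IH] //=; rewrite inE; case/orP.
  by move/eqP=> -> h; rewrite !inE; case/orP: h => ->; rewrite ?orbT.
by move=> pS h; rewrite !inE IH ?orbT.
Qed.

Lemma adj_verts S a b : adj S a b -> (a \in verts S) && (b \in verts S).
Proof.
case/orP=> h; apply/andP; split; apply/mem_verts.
- by exists (a, b) => //=; rewrite eqxx.
- by exists (a, b) => //=; rewrite eqxx orbT.
- by exists (b, a) => //=; rewrite eqxx orbT.
- by exists (b, a) => //=; rewrite eqxx.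
Qed.

Lemma verts_bound N S x : bounded N S -> x \in verts S -> (x < N)%N.
Proof.
by move=> bS /mem_verts [p /bS [h1 h2]] /orP [] /eqP ->.
Qed.

Lemma sub_iota N S : bounded N S -> {subset verts S <= iota 0 N}.
Proof. by move=> bS x xV; rewrite mem_iota /= (verts_bound bS xV). Qed.

Definition T3 (N : nat) (E : seq edge) : nat :=
  (\sum_(c <- iota 0 N) \sum_(a <- iota 0 N) \sum_(b <- iota 0 N)
    [&& (a < b)%N, (b < c)%N, adj E a b, adj E b c & adj E a c])%N.

Lemma size_triangles N E : bounded N E -> size (triangles E) = T3 N E.
Proof.
move=> bE.
rewrite /triangles size_filter -sum1_count big_mkcond /= big_flatten /= big_map.
have uV := undup_uniq (flatten [seq [:: e.1; e.2] | e <- E]).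
have sV := sub_iota bE.
rewrite /T3 (@sum_ext (verts E) (iota 0 N)) ?iota_uniq //; last first.
  move=> c _ cV; rewrite !big_map big_allpairs big1 // => a _; rewrite big1 // => b _.
  case: ifP => //= /and5P[_ _ _ /adj_verts /andP[_ h] _].
  by rewrite h in cV.
apply: eq_bigr => c _; rewrite big_map big_allpairs.
rewrite (@sum_ext (verts E) (iota 0 N)) ?iota_uniq //; last first.
  move=> a _ aV; rewrite big1 // => b _.
  case: ifP => //= /and5P[_ _ /adj_verts /andP[h _] _ _].
  by rewrite h in aV.
apply: eq_bigr => a _.
rewrite (@sum_ext (verts E) (iota 0 N)) ?iota_uniq //.
move=> b _ bV; case: ifP => //= /and5P[_ _ /adj_verts /andP[_ h] _ _].
by rewrite h in bV.
Qed.

Lemma size_nbhd N S u v : bounded N S ->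
  size (nbhd S u v) = (\sum_(c <- iota 0 N) (adj S c u && adj S c v))%N.
Proof.
move=> bS; rewrite /nbhd size_filter -sum1_count big_mkcond /=.
apply: sum_ext; rewrite ?iota_uniq ?undup_uniq //; first exact: sub_iota.
move=> c _ cV; case: ifP => // /andP[/adj_verts /andP[h _] _].
by rewrite h in cV.
Qed.


Ltac decide_lt :=
  repeat match goal with
  | |- context[(?x < ?y)%N] =>
      first [ rewrite (_ : (x < y)%N = true); last by lia
            | rewrite (_ : (x < y)%N = false); last by lia
            | case: (ltnP x y) => ? ]
  end.

Lemma tri_point (u v a b c : nat) (A : nat -> nat -> bool) :
  (u < v)%N -> A u v = false ->
  let A' x y := A x y || ((x == u) && (y == v)) || ((x == v) && (y == u)) in
  ([&& (a < b)%N, (b < c)%N, A' a b, A' b c & A' a c] : nat) =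
  ([&& (a < b)%N, (b < c)%N, A a b, A b c & A a c] +
   (a == u) * ((b == v) * [&& (v < c)%N, A v c & A u c]) +
   (c == v) * ((b == u) * [&& (a < u)%N, A a u & A a v]) +
   (c == v) * ((a == u) * [&& (u < b)%N, (b < v)%N, A u b & A b v]))%N.
Proof.
move=> uv Auv A' /=; rewrite /A'.
case: (a =P u) => au; case: (a =P v) => av; case: (b =P u) => bu;
case: (b =P v) => bv; case: (c =P u) => cu; case: (c =P v) => cv;
  try (exfalso; lia);
  repeat match goal with H : _ = _ |- _ => subst end;
  rewrite ?Auv /=; decide_lt; rewrite /= ?andbF ?andbT ?orbF ?andFb;
  repeat match goal with |- context[A ?x ?y] => case: (A x y) end; 
  rewrite /= ?andbF ?andbT ?orbF ?andFb; try lia.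
Qed.


Definition sum3 N (F : nat -> nat -> nat -> nat) :=
  (\sum_(c <- iota 0 N) \sum_(a <- iota 0 N) \sum_(b <- iota 0 N) F c a b)%N.

Lemma sum3D N F G : sum3 N (fun c a b => F c a b + G c a b)%N = (sum3 N F + sum3 N G)%N.
Proof.
rewrite /sum3 -big_split; apply: eq_bigr => c _.
rewrite -big_split; apply: eq_bigr => a _; exact: big_split.
Qed.

Lemma tri_inc (N u v : nat) (A : nat -> nat -> bool) :
  (u < v)%N -> (v < N)%N -> (forall x y, A x y = A y x) -> A u v = false ->
  let A' x y := A x y || ((x == u) && (y == v)) || ((x == v) && (y == u)) in
  sum3 N (fun c a b => [&& (a < b)%N, (b < c)%N, A' a b, A' b c & A' a c] : nat) =
  (sum3 N (fun c a b => [&& (a < b)%N, (b < c)%N, A a b, A b c & A a c] : nat) +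
   \sum_(x <- iota 0 N) [&& x != u, x != v, A x u & A x v])%N.
Proof.
move=> uv vN Asym Auv A'.
have uN : (u < N)%N by lia.
rewrite {1}/sum3.
under eq_bigr => c _ do under eq_bigr => a _ do under eq_bigr => b _ do
  rewrite (tri_point a b c uv Auv).
rewrite -/(sum3 _ _) !sum3D -!addnA; congr (_ + _)%N.
rewrite /sum3.
under eq_bigr => c _ do under eq_bigr => a _ do rewrite -big_distrr /= sum_pick //.
under eq_bigr => c _ do rewrite sum_pick //.
under [X in (_ + (X + _))%N]eq_bigr => c _ do
  under eq_bigr => a _ do rewrite -big_distrr /=.
under [X in (_ + (X + _))%N]eq_bigr => c _ do rewrite -big_distrr /=.
rewrite sum_pick //.
under [X in (_ + (_ + X))%N]eq_bigr => c _ do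
  under eq_bigr => a _ do rewrite -big_distrr /=.
under [X in (_ + (_ + X))%N]eq_bigr => c _ do rewrite -big_distrr /=.
rewrite sum_pick //.
under [X in (_ + (_ + X))%N]eq_bigr => a _ do rewrite -big_distrr /=.
rewrite sum_pick //.
under [X in (_ + (X + _))%N]eq_bigr => a _ do rewrite (@sum_pick N u (fun _ => _)) //.
rewrite -!big_split /=; apply: eq_bigr => x _.
rewrite (Asym v x) (Asym u x).
case: (A x u); case: (A x v); rewrite /= ?andbF ?andbT //;
case: (x =P u) => xu; case: (x =P v) => xv; rewrite /=; try lia.
Qed.


Lemma adj_eq_mem (S1 S2 : seq edge) : S1 =i S2 -> adj S1 =2 adj S2.
Proof. by move=> h x y; rewrite /adj !h. Qed.

Lemma T3_eq_adj N (S1 S2 : seq edge) : adj S1 =2 adj S2 -> T3 N S1 = T3 N S2.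
Proof.
move=> h; rewrite /T3; apply: eq_bigr => c _; apply: eq_bigr => a _.
by apply: eq_bigr => b _; rewrite !h.
Qed.

Lemma T3_eq_mem N (S1 S2 : seq edge) : S1 =i S2 -> T3 N S1 = T3 N S2.
Proof. by move=> /adj_eq_mem; apply: T3_eq_adj. Qed.

Lemma adj_sym S x y : adj S x y = adj S y x.
Proof. by rewrite /adj orbC. Qed.

Lemma adj_cons S u v x y :
  adj ((u, v) :: S) x y = adj S x y || ((x == u) && (y == v)) || ((x == v) && (y == u)).
Proof.
rewrite /adj !inE !xpair_eqE.
by case: (x == u); case: (x == v); case: (y == u); case: (y == v);
  case: ((x, y) \in S); case: ((y, x) \in S).
Qed.

Definition loopfree (S : seq edge) := forall x, (x, x) \notin S.

Lemma adj_irr S x : loopfree S -> adj S x x = false.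
Proof. by move=> lf; rewrite /adj orbb; apply/negbTE. Qed.

Lemma nbhd_sum N S u v : u != v -> (u, v) \notin S -> (v, u) \notin S ->
  loopfree S -> bounded N S ->
  size (nbhd S u v) = (\sum_(c <- iota 0 N) [&& c != u, c != v, adj S c u & adj S c v])%N.
Proof.
move=> uv h1 h2 lf bS; rewrite (size_nbhd _ _ bS); apply: eq_bigr => c _.
case: (c =P u) => [->|_]; first by rewrite adj_irr.
case: (c =P v) => [->|_] //=; by rewrite [adj S v v]adj_irr // andbF.
Qed.

Lemma bounded_cons N S u v : (u < N)%N -> (v < N)%N -> bounded N S ->
  bounded N ((u, v) :: S).
Proof. by move=> uN vN bS p; rewrite inE => /orP[/eqP -> //|]; apply: bS. Qed.

Lemma nbhd_cons_sum N S u v : u != v -> (u, v) \notin S -> (v, u) \notin S ->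
  loopfree S -> (u < N)%N -> (v < N)%N -> bounded N S ->
  size (nbhd ((u, v) :: S) u v) =
  (\sum_(c <- iota 0 N) [&& c != u, c != v, adj S c u & adj S c v])%N.
Proof.
move=> uv h1 h2 lf uN vN bS; rewrite (size_nbhd _ _ (bounded_cons uN vN bS)).
apply: eq_bigr => c _; rewrite !adj_cons !eqxx /= ?andbT.
case: (c =P u) => [->|_]; first by rewrite adj_irr // (negbTE uv) eq_sym (negbTE uv).
case: (c =P v) => [->|_] /=; last by rewrite ?andbF ?orbF.
by rewrite adj_irr // eq_sym (negbTE uv) !andbF.
Qed.

Lemma T3_ins_sum N S u v : u != v -> (u, v) \notin S -> (v, u) \notin S ->
  (u < N)%N -> (v < N)%N ->
  T3 N ((u, v) :: S) = (T3 N S +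
    \sum_(c <- iota 0 N) [&& c != u, c != v, adj S c u & adj S c v])%N.
Proof.
wlog: u v / (u < v)%N => [hw|uv].
  move=> uv h1 h2 uN vN; case: (ltngtP u v) => [/hw-> //|vu|e]; last first.
    by rewrite e eqxx in uv.
  rewrite (T3_eq_adj _ (_ : _ =2 adj ((v, u) :: S))); last first.
    by move=> x y; rewrite !adj_cons; case: (_ && _); case: (_ && _); rewrite ?orbT ?orbF.
  rewrite hw // ?(eq_sym v) //; congr (_ + _)%N; apply: eq_bigr => c _.
  by case: (c != u); case: (c != v); rewrite //= andbC.
move=> _ h1 h2 uN vN.
have Auv : adj S u v = false by rewrite /adj (negbTE h1) (negbTE h2).
have := tri_inc uv vN (adj_sym S) Auv; rewrite /= => <-.
rewrite /T3 /sum3; apply: eq_bigr => c _; apply: eq_bigr => a _.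
by apply: eq_bigr => b _; rewrite !adj_cons.
Qed.


Lemma mem_E_at (e : nat -> edge) t x :
  reflect (exists2 i, (0 < i <= t)%N & x = e i) (x \in E_at e t).
Proof.
rewrite /E_at; apply: (iffP mapP) => [[i]|[i]]; rewrite ?mem_iota => hi ->;
  exists i => //; rewrite ?mem_iota; lia.
Qed.

Lemma E_atS (e : nat -> edge) t : E_at e t.+1 = rcons (E_at e t) (e t.+1).
Proof.
rewrite /E_at; have -> : iota 1 t.+1 = iota 1 t ++ [:: t.+1] by have h := iotaD 1 t 1; rewrite addn1 add1n in h.
by rewrite /E_at map_cat cats1.
Qed.

Lemma enorm_swap u v : enorm (v, u) = enorm (u, v).
Proof. by rewrite /enorm /= minnC maxnC. Qed.

Lemma enorm_inj p q : enorm p = enorm q -> p = q \/ p = (q.2, q.1).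
Proof.
case: p => a b; case: q => c d; rewrite /enorm /= => [[h1 h2]].
have : ((a = c) /\ (b = d)) \/ ((a = d) /\ (b = c)) by lia.
by case=> [[-> ->]|[-> ->]]; [left|right].
Qed.

Lemma adj_enorm S x y : adj S x y = (enorm (x, y) \in map enorm S).
Proof.
apply/idP/idP.
  case/orP=> h; apply/mapP; [exists (x, y) | exists (y, x)] => //.
  by rewrite enorm_swap.
case/mapP=> p pS /esym /enorm_inj [] E; rewrite E /= in pS; rewrite /adj pS ?orbT //.
Qed.

Lemma stream_new e t S : valid_stream e -> {subset S <= E_at e t} ->
  enorm (e t.+1) \notin map enorm S.
Proof.
move=> [_ vs] sub; apply/mapP => [[p /sub /mem_E_at [i hi ->] h]].
have : (0 < i)%N /\ (i < t.+1)%N by lia.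
by case=> h1 h2; move: (vs _ _ h1 h2); rewrite h eqxx.
Qed.

Lemma stream_loopfree e t S : valid_stream e -> {subset S <= E_at e t} -> loopfree S.
Proof.
move=> [vl _] sub x; apply/negP => /sub /mem_E_at [i hi h].
have : (0 < i)%N by lia.
by move/vl; rewrite -h /= eqxx.
Qed.

Definition vbound (e : nat -> edge) T N :=
  forall i, (0 < i <= T)%N -> ((e i).1 < N)%N /\ ((e i).2 < N)%N.

Lemma stream_bounded e T N t S : vbound e T N -> (t <= T)%N ->
  {subset S <= E_at e t} -> bounded N S.
Proof.
move=> vb tT sub p /sub /mem_E_at [i hi ->]; apply: vb; lia.
Qed.

Lemma notin_both S u v : enorm (u, v) \notin map enorm S ->
  ((u, v) \notin S) && ((v, u) \notin S).
Proof.
move=> h; apply/andP; split; apply/negP => h'; move/negP: h; apply.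
  by apply/mapP; exists (u, v).
by apply/mapP; exists (v, u) => //; rewrite enorm_swap.
Qed.

Lemma uniq_E_at e t : valid_stream e -> uniq (map enorm (E_at e t)).
Proof.
move=> vs; elim: t => [|t IH] //; rewrite E_atS map_rcons rcons_uniq IH andbT.
exact: stream_new.
Qed.

Definition Pre N e t (st : state) :=
  [&& uniq (map enorm st.1), all (fun x => x \in E_at e t) st.1 &
      st.2 == Posz (T3 N st.1)].

Lemma Pre_mono N e t st : Pre N e t st -> Pre N e t.+1 st.
Proof.
case/and3P=> h1 /allP h2 h3; apply/and3P; split => //; apply/allP => x /h2.
by rewrite E_atS mem_rcons inE => ->; rewrite orbT.
Qed.

Lemma Pre_ins N e T t st : valid_stream e -> vbound e T N -> (t < T)%N ->
  Pre N e t st -> Pre N e t.+1 (ins st (e t.+1)).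
Proof.
move=> vs vb tT /and3P[h1 /allP h2 /eqP h3].
have nw := stream_new vs h2.
rewrite /ins /=; apply/and3P; split => /=.
- by rewrite nw.
- rewrite E_atS mem_rcons inE eqxx /=; apply/allP => x /h2.
  by rewrite mem_rcons inE => ->; rewrite orbT.
case E: (e t.+1) nw => [u v] nw /=.
have [hu hv] : (u < N)%N /\ (v < N)%N by have := vb t.+1; rewrite E; apply; lia.
have lf := stream_loopfree vs h2.
have bS := stream_bounded vb (ltnW tT) h2.
have uv : u != v by case: vs => vl _; have := vl t.+1 isT; rewrite E.
case/andP: (notin_both nw) => n1 n2.
rewrite h3 (T3_ins_sum uv n1 n2 hu hv) (nbhd_cons_sum uv n1 n2 lf hu hv bS).
by rewrite PoszD.
Qed.

Lemma Pre_del N e T t st f : valid_stream e -> vbound e T N -> (t <= T)%N ->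
  Pre N e t st -> f \in st.1 -> Pre N e t (del st f).
Proof.
move=> vs vb tT /and3P[h1 /allP h2 /eqP h3] fS.
have pf := perm_map enorm (perm_to_rem fS).
have h1' : uniq (map enorm (f :: rem f st.1)) by rewrite -(perm_uniq pf).
move: h1' => /= /andP[nf ur].
rewrite /del /=; apply/and3P; split => //.
  by apply/allP => x /mem_rem /h2.
have sub' : {subset rem f st.1 <= E_at e t} by move=> x /mem_rem /h2.
have lf := stream_loopfree vs sub'.
have bS := stream_bounded vb tT sub'.
move: (h2 _ fS) nf => /mem_E_at [i hi Ef]; subst f => nf.
case E: (e i) nf lf bS => [u v] nf lf bS /=.
have uv : u != v by case: vs => vl _; have := vl i; rewrite E; apply; lia.
have [hu hv] : (u < N)%N /\ (v < N)%N by have := vb i; rewrite E; apply; lia.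
case/andP: (notin_both nf) => n1 n2.
rewrite h3 (T3_eq_mem _ (_ : st.1 =i (u, v) :: rem (u, v) st.1)); last first.
  by apply: perm_mem; apply: perm_to_rem; rewrite -E.
rewrite (T3_ins_sum uv n1 n2 hu hv) (nbhd_sum uv n1 n2 lf bS).
by rewrite PoszD addrK.
Qed.


Definition Inv M N e t (st : state) := Pre N e t st && (size st.1 == minn t M).

Lemma T3_nil N : T3 N [::] = 0%N.
Proof.
rewrite /T3; apply: big1 => c _; apply: big1 => a _; apply: big1 => b _.
by rewrite /adj /= !andbF.
Qed.

Lemma mem_dbind (R : fieldType) (T U : eqType) (d : dist R T) (f : T -> dist R U)
  (p : R * U) : p \in dbind d f -> exists2 q, q \in d & p.2 \in map snd (f q.2).
Proof.
rewrite /dbind => /flattenP [s /mapP [q qd ->] /mapP [r rf ->]].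
by exists q => //=; apply/mapP; exists r.
Qed.

Lemma step_inv (R : fieldType) M N e T t st : (0 < M)%N -> valid_stream e ->
  vbound e T N -> (t < T)%N -> Inv M N e t st ->
  all (Inv M N e t.+1) (map snd (step R M t.+1 (e t.+1) st)).
Proof.
move=> M0 vs vb tT /andP[hP /eqP hs]; rewrite /step.
case: ifP => tM.
  rewrite /= andbT /Inv (Pre_ins vs vb tT hP) /= hs; apply/eqP; lia.
rewrite map_cat all_cat /= andbT /Inv (Pre_mono hP) /= hs.
apply/andP; split; last by apply/eqP; lia.
rewrite -map_comp; apply/allP => x /mapP [f fS ->] /=.
rewrite (Pre_ins vs vb tT (Pre_del vs vb (ltnW tT) hP fS)) /=.
rewrite size_rem // hs; apply/eqP.
have : (0 < size st.1)%N by case: (st.1) fS.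
rewrite hs; lia.
Qed.

Lemma run_inv (R : fieldType) M N e T : (0 < M)%N -> valid_stream e ->
  vbound e T N -> forall t, (t <= T)%N -> all (fun p => Inv M N e t p.2) (run R M e t).
Proof.
move=> M0 vs vb; elim=> [|t IH] tT.
  by rewrite /= /Inv /Pre /= T3_nil min0n.
apply/allP => p /mem_dbind [q qd pq].
have hq : Inv M N e t q.2 by move/allP: (IH (ltnW tT)) => /(_ q qd).
by move/allP: (step_inv R M0 vs vb tT hq) => /(_ _ pq).
Qed.

Lemma run_small (R : fieldType) M e t : (t <= M)%N ->
  exists st, run R M e t = [:: (1%R, st)].
Proof.
elim: t => [|t IH] tM; first by exists ([::], 0%R).
case: (IH (ltnW tM)) => st hst.
exists (ins st (e t.+1)); rewrite /= hst /dbind /step tM /= mulr1.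
done.
Qed.

Local Open Scope ring_scope.

Lemma expect_bind (R : comRingType) T U (d : dist R T) (f : T -> dist R U) X :
  expect (dbind d f) X = \sum_(p <- d) p.1 * expect (f p.2) X.
Proof.
rewrite /expect /dbind big_flatten /= big_map; apply: eq_bigr => p _.
by rewrite big_map big_distrr; apply: eq_bigr => q _ /=; rewrite mulrA.
Qed.

Lemma expect_scale (R : comRingType) T (d : dist R T) k X :
  expect d (fun s => k * X s) = k * expect d X.
Proof.
by rewrite /expect big_distrr; apply: eq_bigr => p _; rewrite mulrCA.
Qed.

Lemma expect_sum (R : comRingType) T I (d : dist R T) (r : seq I) X :
  expect d (fun s => \sum_(i <- r) X i s) = \sum_(i <- r) expect d (X i).
Proof.
rewrite /expect; under eq_bigr => p _ do rewrite big_distrr.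
exact: exchange_big.
Qed.

Lemma expect_ext (R : comRingType) (T : eqType) (d : dist R T) X Y :
  (forall p, p \in d -> X p.2 = Y p.2) -> expect d X = expect d Y.
Proof.
by move=> h; rewrite /expect big_seq [RHS]big_seq; apply: eq_bigr => p /h ->.
Qed.

Lemma sum_ind_count (R : ringType) T (P : pred T) (s : seq T) :
  \sum_(f <- s) (P f)%:R = (count P s)%:R :> R.
Proof. by elim: s => [|x s IH]; rewrite ?big_nil ?big_cons //= IH natrD. Qed.

Lemma mem_enorm_rem (S : seq edge) f x : uniq (map enorm S) -> f \in S ->
  (x \in map enorm (rem f S)) = (x \in map enorm S) && (x != enorm f).
Proof.
move=> uS fS; have pf := perm_map enorm (perm_to_rem fS).
have : uniq (map enorm (f :: rem f S)) by rewrite -(perm_uniq pf).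
rewrite (perm_mem pf) /= => /andP[nf _]; rewrite inE.
case: (x =P enorm f) => [->|_] /=; first by rewrite (negbTE nf).
by rewrite andbT.
Qed.

Lemma all_andnot (B : seq edge) (P : pred edge) y :
  all (fun x => P x && (x != y)) B = all P B && (y \notin B).
Proof.
elim: B => [|x B IH] //=; rewrite IH inE eq_sym.
by case: (P x); case: (all P B); case: (y == x).
Qed.

Lemma count_notin (S B : seq edge) : uniq (map enorm S) -> uniq B ->
  {subset B <= map enorm S} ->
  count (fun f => enorm f \notin B) S = (size S - size B)%N.
Proof.
move=> uS uB sub.
have -> : count (fun f => enorm f \notin B) S = count (predC (mem B)) (map enorm S).
  by rewrite count_map.
have h := count_predC (mem B) (map enorm S).
have hB : count (mem B) (map enorm S) = size B.
  rewrite -size_filter; apply: perm_size; apply: uniq_perm; rewrite ?filter_uniq //.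
  move=> x; rewrite mem_filter; apply/andP/idP => [[] //|xB]; split => //; exact: sub.
rewrite size_map hB in h; lia.
Qed.

Definition Xind (R : ringType) (A : seq edge) (st : state) : R :=
  (all (fun x => x \in map enorm st.1) A)%:R.

Lemma natr_andb (R : ringType) (b c : bool) : ((b && c) : nat)%:R = (b : nat)%:R * (c : nat)%:R :> R.
Proof. by case: b; case: c; rewrite /= ?mulr1 ?mulr0 ?mul0r. Qed.

Lemma step_exp (R : realFieldType) M N e T t st A :
  valid_stream e -> vbound e T N -> (t < T)%N -> (M <= t)%N -> (0 < M)%N ->
  Inv M N e t st -> uniq A -> (size A <= M)%N ->
  expect (step R M t.+1 (e t.+1) st) (Xind R A) =
  if enorm (e t.+1) \in A
  then (M - (size A).-1)%:R / (t.+1)%:R * Xind R (rem (enorm (e t.+1)) A) st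
  else (t.+1 - size A)%:R / (t.+1)%:R * Xind R A st.
Proof.
move=> vs vb tT Mt M0 /andP[/and3P[uS /allP sub _] /eqP hs] uA kM.
have sM : size st.1 = M by rewrite hs; lia.
have nw := stream_new vs sub.
have M0' : M%:R != 0 :> R by rewrite pnatr_eq0 -lt0n.
have t0' : (t.+1)%:R != 0 :> R by rewrite pnatr_eq0.
rewrite /step (_ : (t.+1 <= M)%N = false); last by lia.
rewrite /expect big_cat big_map /= big_cons big_nil addr0 /=.
set g := enorm (e t.+1) in nw *.
have h1 : forall f, f \in st.1 -> Xind R A (ins (del st f) (e t.+1)) =
   if g \in A then Xind R (rem g A) st * (enorm f \notin rem g A : nat)%:R
   else Xind R A st * (enorm f \notin A : nat)%:R.
  move=> f fS; rewrite /Xind /= -/g.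
  case gA: (g \in A).
    rewrite (perm_all _ (perm_to_rem gA)) /= inE eqxx /=.
    rewrite -natr_andb -all_andnot; do 2 apply: congr1; apply: eq_in_all => x.
    rewrite (mem_rem_uniq _ uA) inE => /andP[xg _].
    by rewrite inE (negbTE xg) /= mem_enorm_rem.
  rewrite -natr_andb -all_andnot; do 2 apply: congr1; apply: eq_in_all => x xA.
  have xg : x != g by apply/eqP => xg; rewrite -xg xA in gA.
  by rewrite inE (negbTE xg) /= mem_enorm_rem.
rewrite big_seq; under eq_bigr => f fS do rewrite (h1 f fS).
rewrite -big_seq.
case gA: (g \in A).
  have -> : Xind R A st = 0.
    rewrite /Xind (_ : all _ _ = false) //; apply/negbTE/negP => /allP /(_ g gA).
    by rewrite (negbTE nw).
  rewrite mulr0 addr0.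
  under eq_bigr => f _ do rewrite mulrA.
  rewrite -big_distrr /= sum_ind_count.
  rewrite /Xind; case hA: (all _ (rem g A)); last by rewrite !mulr0 mul0r.
  rewrite count_notin ?rem_uniq //; last by apply/allP.
  have kA := size_rem gA; have kA0 : (0 < size A)%N by case: (A) gA.
  rewrite sM kA natrB; last by lia.
  rewrite /=; field; rewrite ?[1 + _]addrC ?natr1 ?M0' ?t0' //.
under eq_bigr => f _ do rewrite mulrA.
rewrite -big_distrr /= sum_ind_count.
rewrite /Xind; case hA: (all _ A); last by rewrite !mulr0 mul0r addr0.
rewrite count_notin //; last by apply/allP.
rewrite sM natrB; last exact: kM.
rewrite natrB; last exact: leq_trans kM (leq_trans Mt (leqnSn t)).
by rewrite /=; field; rewrite [1 + _]addrC natr1 t0' M0'.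
Qed.



Lemma ffact_neq0 (R : realFieldType) n k : (k <= n)%N -> (n ^_ k)%:R != 0 :> R.
Proof. by move=> kn; rewrite pnatr_eq0 -lt0n ffact_gt0. Qed.

Lemma expect_lin (R : realFieldType) M e t (K : R) (X Y : state -> R) N T :
  (0 < M)%N -> valid_stream e -> vbound e T N -> (t < T)%N ->
  (forall st, Inv M N e t st -> expect (step R M t.+1 (e t.+1) st) X = K * Y st) ->
  expect (run R M e t.+1) X = K * expect (run R M e t) Y.
Proof.
move=> M0 vs vb tT h.
have inv := run_inv R M0 vs vb (ltnW tT).
rewrite [run _ _ _ _.+1]/= expect_bind -expect_scale /expect big_seq [RHS]big_seq.
apply: eq_bigr => p pd; congr (_ * _); apply: h; by move/allP: inv => /(_ p pd).
Qed.

Lemma reservoir (R : realFieldType) M N e T : (0 < M)%N -> valid_stream e ->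
  vbound e T N -> forall d, (M + d <= T)%N -> forall A, uniq A ->
  {subset A <= map enorm (E_at e (M + d))} -> (size A <= M)%N ->
  expect (run R M e (M + d)) (Xind R A) =
  (M ^_ (size A))%:R / ((M + d) ^_ (size A))%:R.
Proof.
move=> M0 vs vb; elim=> [|d IH] hT A uA sA kA.
  rewrite addn0 in hT sA *.
  case: (run_small R e (leqnn M)) => st hst.
  have := run_inv R M0 vs vb hT; rewrite hst /= andbT.
  move=> /andP[/and3P[uS /allP sub _] /eqP hs].
  rewrite /expect big_cons big_nil mul1r addr0 divff ?ffact_neq0 //.
  have sub' : {subset map enorm st.1 <= map enorm (E_at e M)}.
    by move=> x /mapP [p pS ->]; apply: map_f; exact: sub.
  have [|_ eqm] := uniq_min_size uS sub'.
    by rewrite !size_map size_iota hs minnn.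
  by rewrite /Xind (_ : all _ A = true) //; apply/allP => x /sA; rewrite eqm.
rewrite addnS in hT sA *.
move: IH hT sA; set t := (M + d)%N => IH hT sA.
have Mt : (M <= t)%N by rewrite leq_addr.
have t0' : (t.+1)%:R != 0 :> R by rewrite pnatr_eq0.
set g := enorm (e t.+1) in sA *.
case gA: (g \in A).
  have kA0 : (0 < size A)%N by case: (A) gA.
  have skA := size_rem gA.
  rewrite (@expect_lin R M e t ((M - (size A).-1)%:R / (t.+1)%:R) _ (Xind R (rem g A)) N T) //; last first.
    by move=> st inv; rewrite (step_exp R vs vb hT Mt M0 inv uA kA) -/g gA.
  rewrite IH; first last.
  - by rewrite skA; lia.
  - move=> x; rewrite (mem_rem_uniq _ uA) inE => /andP[xg /sA].
    by rewrite E_atS map_rcons mem_rcons inE -/g (negbTE xg).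
  - exact: rem_uniq.
  - exact: ltnW.
  rewrite skA; move: kA0 kA; case: (size A) => [//|k] _ kA /=.
  rewrite ffactnSr ffactSS !natrM natrB; last by lia.
  have : (t ^_ k)%:R != 0 :> R by apply: ffact_neq0; lia.
  by move=> h0; field; rewrite h0 [1 + _]addrC natr1 t0'.
rewrite (@expect_lin R M e t ((t.+1 - size A)%:R / (t.+1)%:R) _ (Xind R A) N T) //; last first.
  by move=> st inv; rewrite (step_exp R vs vb hT Mt M0 inv uA kA) -/g gA.
rewrite IH; first last.
- done.
- move=> x xA; have := sA _ xA.
  have xg : x != g by apply/eqP => xg; rewrite xg gA in xA.
  by rewrite E_atS map_rcons mem_rcons inE -/g (negbTE xg).
- done.
- exact: ltnW.
have h : ((t.+1) ^_ (size A) * (t.+1 - size A) = t.+1 * t ^_ (size A))%N.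
  by rewrite -ffactnSr ffactSS.
have h1 : ((t.+1) ^_ (size A))%:R != 0 :> R by apply: ffact_neq0; lia.
have h2 : (t ^_ (size A))%:R != 0 :> R by apply: ffact_neq0; lia.
have hc : (t.+1 - size A)%:R = (t.+1)%:R * (t ^_ (size A))%:R / ((t.+1) ^_ (size A))%:R :> R.
  by rewrite -natrM -h natrM mulrC mulKf.
by rewrite hc; field; rewrite h1 h2 ?[1 + _]addrC ?natr1 ?t0'.
Qed.


Lemma vbound_ex (e : nat -> edge) t : exists N, vbound e t N.
Proof.
elim: t => [|t [N hN]]; first by exists 0%N => i; lia.
exists (maxn N (maxn (e t.+1).1 (e t.+1).2).+1) => i hi.
case: (ltngtP i t.+1) => [ilt|gt|->]; [|lia|by split; lia].
have := hN i; case; first by lia.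
move=> h1 h2; split; lia.
Qed.

Lemma expect_T3 (R : realFieldType) N (d : dist R state) :
  expect d (fun st => (T3 N st.1)%:R) =
  \sum_(c <- iota 0 N) \sum_(a <- iota 0 N) \sum_(b <- iota 0 N)
    expect d (fun st => ([&& (a < b)%N, (b < c)%N, adj st.1 a b, adj st.1 b c & adj st.1 a c] : nat)%:R).
Proof.
transitivity (expect d (fun st => \sum_(c <- iota 0 N) \sum_(a <- iota 0 N) \sum_(b <- iota 0 N)
    ([&& (a < b)%N, (b < c)%N, adj st.1 a b, adj st.1 b c & adj st.1 a c] : nat)%:R)).
  rewrite /expect; apply: eq_bigr => p _; congr (_ * _).
  rewrite /T3 natr_sum; apply: eq_bigr => c _; rewrite natr_sum; apply: eq_bigr => a _.
  by rewrite natr_sum.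
rewrite expect_sum; apply: eq_bigr => c _; rewrite expect_sum; apply: eq_bigr => a _.
by rewrite expect_sum.
Qed.

Lemma enorm_lt x y : (x < y)%N -> enorm (x, y) = (x, y).
Proof. by move=> h; rewrite /enorm /= (minn_idPl (ltnW h)) (maxn_idPr (ltnW h)). Qed.

Lemma expect0 (R : ringType) T (d : dist R T) : expect d (fun _ => 0) = 0.
Proof. by rewrite /expect big1 // => p _; rewrite mulr0. Qed.

Lemma term_exp (R : realFieldType) M N e d c a b : (6 <= M)%N -> valid_stream e ->
  vbound e (M + d) N ->
  expect (run R M e (M + d))
    (fun st => ([&& (a < b)%N, (b < c)%N, adj st.1 a b, adj st.1 b c & adj st.1 a c] : nat)%:R)
  = ([&& (a < b)%N, (b < c)%N, adj (E_at e (M + d)) a b, adj (E_at e (M + d)) b c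
        & adj (E_at e (M + d)) a c] : nat)%:R * ((M ^_ 3)%:R / ((M + d) ^_ 3)%:R).
Proof.
move=> M6 vs vb.
have M0 : (0 < M)%N by lia.
have inv := run_inv R M0 vs vb (leqnn _).
case ab: (a < b)%N; last by rewrite /= mul0r expect0.
case bc: (b < c)%N; last by rewrite /= mul0r expect0.
have ac : (a < c)%N by apply: ltn_trans ab bc.
set E := E_at e (M + d).
case tri: [&& adj E a b, adj E b c & adj E a c]; last first.
  rewrite /= mul0r -(expect0 (run R M e (M + d))); apply: expect_ext => p pd.
  move/allP: inv => /(_ p pd) /andP[/and3P[_ /allP sub _] _].
  have sadj : forall x y, adj p.2.1 x y -> adj E x y.
    by move=> x y /orP[] h; rewrite /adj (sub _ h) ?orbT.
  case h: [&& adj p.2.1 a b, adj p.2.1 b c & adj p.2.1 a c] => //.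
  case/and3P: h => /sadj h1 /sadj h2 /sadj h3.
  by rewrite h1 h2 h3 in tri.
rewrite /= mul1r.
case/and3P: tri => t1 t2 t3.
set A := [:: (a, b); (b, c); (a, c)].
have -> : (M ^_ 3)%:R / ((M + d) ^_ 3)%:R = (M ^_ (size A))%:R / ((M + d) ^_ (size A))%:R :> R by [].
rewrite -(reservoir R M0 vs vb (leqnn _)); last first.
- by rewrite /= ; lia.
- move=> x; rewrite !inE => /or3P[] /eqP ->.
  + by rewrite -(enorm_lt ab) -adj_enorm.
  + by rewrite -(enorm_lt bc) -adj_enorm.
  + by rewrite -(enorm_lt ac) -adj_enorm.
- rewrite /= ?inE !xpair_eqE ?(ltn_eqF ab) ?(ltn_eqF bc) ?(ltn_eqF ac)
    ?(gtn_eqF ab) ?(gtn_eqF bc) ?(gtn_eqF ac) /= ?andbF ?eqxx /= ?andbF //.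
apply: expect_ext => p _; rewrite /Xind /= andbT.
by rewrite !adj_enorm (enorm_lt ab) (enorm_lt bc) (enorm_lt ac).
Qed.

Unset Implicit Arguments.

Lemma xi_val (R : realFieldType) M t : (M < t)%N ->
  xi R M t = (t ^_ 3)%:R / (M ^_ 3)%:R.
Proof.
move=> Mt; rewrite /xi /xi_ab (_ : (t <= M)%N = false); last by lia.
by rewrite prodf_div !ffact_prod !natr_prod.
Qed.

Theorem theorem4p2 (R : realFieldType) (M : nat) (e : nat -> edge) :
  (6 <= M)%N -> valid_stream e ->
  forall t : nat, (0 < t)%N ->
    ((t <= M)%N ->
       prob (run R M e t)
         (fun st => (xi R M t * st.2%:~R == st.2%:~R)
                    && (st.2 == (size (triangles (E_at e t)))%:Z)) = 1) /\
    ((M < t)%N ->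
       expect (run R M e t) (fun st => xi R M t * st.2%:~R)
       = (size (triangles (E_at e t)))%:R).
Proof.
move=> M6 vs t t0; case: (vbound_ex e t) => N vb.
have M0 : (0 < M)%N by lia.
have bE : bounded N (E_at e t) by apply: (stream_bounded vb (leqnn t)).
split.
  move=> tM; case: (run_small R e tM) => st hst.
  have := run_inv R M0 vs vb (leqnn t); rewrite hst /= andbT.
  move=> /andP[/and3P[uS /allP sub /eqP h2] /eqP hs].
  rewrite /prob big_cons big_nil /=.
  have xi1 : xi R M t = 1 by rewrite /xi /xi_ab tM.
  have [|_ eqm] := uniq_min_size (map_uniq uS) sub.
    by rewrite size_map size_iota hs; lia.
  by rewrite xi1 mul1r eqxx /= h2 (T3_eq_mem N eqm) -(size_triangles bE) eqxx addr0.
move=> Mt; have [d td] : exists d, t = (M + d)%N by exists (t - M)%N; lia.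
subst t.
have inv := run_inv R M0 vs vb (leqnn _).
rewrite (@expect_ext R state _ _ (fun st => xi R M (M + d) * (T3 N st.1)%:R)); last first.
  move=> p pd; move/allP: inv => /(_ p pd) /andP[/and3P[_ _ /eqP ->] _] //.
rewrite expect_scale expect_T3.
under eq_bigr => c _ do under eq_bigr => a _ do under eq_bigr => b _ do
  rewrite (term_exp R c a b M6 vs vb).
under eq_bigr => c _ do under eq_bigr => a _ do rewrite -big_distrl.
under eq_bigr => c _ do rewrite -big_distrl.
rewrite -big_distrl /=.
under eq_bigr => c _ do under eq_bigr => a _ do rewrite -natr_sum.
under eq_bigr => c _ do rewrite -natr_sum.
rewrite -natr_sum -/(T3 N _) -(size_triangles bE) xi_val //.
have h1 : ((M + d) ^_ 3)%:R != 0 :> R by apply: ffact_neq0; lia.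
have h2 : (M ^_ 3)%:R != 0 :> R by apply: ffact_neq0; lia.
by field; rewrite h1 h2.
Qed.
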